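(* Under the hypotheses in the context (decomposition of $\mathcal X$ over $A$, $g\in\mathcal G_s$, integer $T>0$, and $\operatorname{argmin}_{u\in\mathcal U} J^*_{t+1}(Ax+Bu)\cap[\bigoplus_{i\in\mathcal I}\mathcal E_i]\neq\emptyset$ for all $x\in\mathcal X$ and $t\in\{0,\dots,T-1\}$), the optimal cost $J^*=J^*_0$ of the finite-horizon problem $(A,B,g,T)$ belongs to $\mathcal G_s$, i.e. $J^*(x)=\sum_{i\in\mathcal I}J^*(\rho_i(x))$ for all $x\in\mathcal X$.
   Context: Let $\mathcal F$ be a field and $\mathcal X,\mathcal U$ finite-dimensional vector spaces over $\mathcal F$. Let $A:\mathcal X\to\mathcal X$ and $B:\mathcal U\to\mathcal X$ be linear maps with $B$ injective, and let $g:\mathcal X\to\mathbb R_{\ge0}$ satisfy $g(x)=0\iff x=0$. Standing assumption: all minima appearing below are attained. For the finite-horizon problem $(A,B,g,T)$ associated with $x_{t+1}=Ax_t+Bu_t$ (cost $\sum_{t=0}^Tg(x_t)$ minimized over input sequences $u_0,\dots,u_{T-1}$), the cost-to-go functions are $J^*_T=g$ and $J^*_t(x)=g(x)+\min_{u\in\mathcal U}J^*_{t+1}(Ax+Bu)$, and the optimal cost is $J^*=J^*_0$. A decomposition of $\mathcal X$ over $A$ is a direct sum $\mathcal X=\mathcal X_1\oplus\cdots\oplus\mathcal X_r$ with $r>1$ and $A\mathcal X_i\subseteq\mathcal X_i$ for all $i\in\mathcal I=\{1,\dots,r\}$; $\rho_i:\mathcal X\to\mathcal X_i$ is the projection along the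 other summands. $\mathcal G_s$ is the set of $h:\mathcal X\to\mathbb R_{\ge0}$ with $h(x)=\sum_i h(\rho_i(x))$ for all $x$. $\mathcal E_i=\{u\in\mathcal U:Bu\in\mathcal X_i\}$. *)

(* Defs.v *)
From HB Require Import structures.
From mathcomp Require Import all_boot all_order all_algebra.
From Stdlib Require Import ClassicalEpsilon.
Set Implicit Arguments. Unset Strict Implicit. Unset Printing Implicit Defensive.
Import Order.TTheory GRing.Theory Num.Theory.
Local Open Scope ring_scope.

Definition is_argmin (U : Type) (R : realFieldType) (f : U -> R) (u : U) : Prop :=
  forall u', f u <= f u'.

(* min_u f u, chosen by classical choice; equals the minimum whenever the
   minimum is attained (the paper's standing assumption). *)
Definition minval (U : Type) (u0 : U) (R : realFieldType) (f : U -> R) : R :=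
  f (epsilon (inhabits u0) (is_argmin f)).

Fixpoint ctg (F : fieldType) (vT uT : vectType F) (R : realFieldType)
    (A : 'End(vT)) (B : 'Hom(uT, vT)) (g : vT -> R) (k : nat) (x : vT) : R :=
  match k with
  | 0 => g x
  | k'.+1 => g x + minval 0 (fun u => ctg A B g k' (A x + B u))
  end.

Definition Jstar (F : fieldType) (vT uT : vectType F) (R : realFieldType)
    (A : 'End(vT)) (B : 'Hom(uT, vT)) (g : vT -> R) (T t : nat) : vT -> R :=
  ctg A B g (T - t).

Definition in_Gs (F : fieldType) (vT : vectType F) (R : realFieldType) (r : nat)
    (rho : 'I_r -> vT -> vT) (h : vT -> R) : Prop :=
  (forall x, 0 <= h x) /\ (forall x, h x = \sum_(i < r) h (rho i x)).

(* Main.v *)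
Require Import Defs.
From HB Require Import structures.
From mathcomp Require Import all_boot all_order all_algebra.
From Stdlib Require Import ClassicalEpsilon.
From mathcomp Require Import zify.
Import Order.TTheory GRing.Theory Num.Theory.
Local Open Scope ring_scope.

Lemma minval_le (U : Type) (u0 : U) (R : realFieldType) (f : U -> R) :
  (exists u, is_argmin f u) -> forall u, minval u0 f <= f u.
Proof.
move=> ex u; rewrite /minval.
have := epsilon_spec (inhabits u0) (is_argmin f) ex; exact.
Qed.

Lemma minval_eq (U : Type) (u0 : U) (R : realFieldType) (f : U -> R) u :
  is_argmin f u -> minval u0 f = f u.
Proof.
move=> Hu; apply/eqP; rewrite eq_le minval_le /=; last by exists u.
exact: Hu.
Qed.

Arguments minval_eq {U} u0 {R f u}.
Arguments minval_le {U} u0 {R f}.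

Section Main.
Variables (F : fieldType) (vT uT : vectType F) (R : realFieldType)
    (A : 'End(vT)) (B : 'Hom(uT, vT)) (g : vT -> R)
    (r : nat) (Xs : 'I_r -> {vspace vT})
    (defX : fullv = (\sum_(i < r) Xs i)%VS)
    (Hdir : directv (\sum_(i < r) Xs i))
    (HAinv : forall i, (A @: Xs i <= Xs i)%VS).

Let rho i := sumv_pi_for defX i.

Lemma rho_in i v : rho i v \in Xs i.
Proof. exact: memv_sum_pi. Qed.

Lemma rho_sum v : \sum_i rho i v = v.
Proof. by apply: sumv_pi_sum; rewrite memvf. Qed.

Lemma rho_uniq (vs : 'I_r -> vT) :
  (forall i, vs i \in Xs i) -> forall i, rho i (\sum_j vs j) = vs i.
Proof.
move=> Hvs i.
move: Hdir => /directv_sum_unique H.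
have := H (fun j => rho j (\sum_j vs j)) vs (fun j _ => rho_in j _) (fun j _ => Hvs j).
rewrite rho_sum eqxx => /esym/forall_inP/(_ i isT)/eqP -> //.
Qed.

Lemma rhoA i v : rho i (A v) = A (rho i v).
Proof.
rewrite -{1}(rho_sum v) linear_sum rho_uniq // => j.
exact: (subvP (HAinv j)) _ (memv_img _ (rho_in j v)).
Qed.

Lemma rho_rho i v : rho i (rho i v) = rho i v.
Proof.
have E : rho i v = \sum_j (if j == i then rho i v else 0).
  rewrite (bigD1 i) //= eqxx big1 ?addr0 // => k /negPf->; done.
rewrite [in LHS]E rho_uniq ?eqxx // => j; case: eqP => [->|_]; rewrite ?rho_in ?mem0v //.
Qed.

Lemma rho_other i j v : i != j -> rho j (rho i v) = 0.
Proof.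
move=> ij.
have E : rho i v = \sum_k (if k == i then rho i v else 0).
  rewrite (bigD1 i) //= eqxx big1 ?addr0 // => k /negPf->; done.
rewrite E rho_uniq 1?eq_sym ?(negPf ij) // => k.
by case: eqP => [->|_]; rewrite ?rho_in ?mem0v.
Qed.

Lemma rho_lin i y (us : 'I_r -> uT) :
  (forall j, B (us j) \in Xs j) ->
  rho i (A y + B (\sum_j us j)) = A (rho i y) + B (us i).
Proof.
move=> Hus; rewrite linearD /= rhoA linear_sum /= rho_uniq //.
Qed.

Variable (hg0 : forall x, 0 <= g x) (hgs : forall x, g x = \sum_i g (rho i x)).

Definition Hk k := forall x, exists2 u, u \in (\sum_(i < r) (B @^-1: Xs i))%VS &
          is_argmin (fun u => ctg A B g k (A x + B u)) u.

Lemma decomp u : u \in (\sum_(i < r) (B @^-1: Xs i))%VS ->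
  exists2 us : 'I_r -> uT, (forall j, B (us j) \in Xs j) & u = \sum_j us j.
Proof.
move=> /memv_sumP[us Hus ->]; exists us => // j.
by rewrite memv_preim; apply: Hus.
Qed.

Lemma step k : Hk k ->
  (forall x, 0 <= ctg A B g k x) ->
  (forall x, ctg A B g k x = \sum_i ctg A B g k (rho i x)) ->
  (forall x, 0 <= ctg A B g k.+1 x) /\
  (forall x, ctg A B g k.+1 x = \sum_i ctg A B g k.+1 (rho i x)).
Proof.
move=> H h0 hs.
set h := ctg A B g k in h0 hs *.
have ex y : exists u, is_argmin (fun u => h (A y + B u)) u.
  by have [u _ ?] := H y; exists u.
have K y (us : 'I_r -> uT) : (forall j, B (us j) \in Xs j) ->
    h (A y + B (\sum_j us j)) = \sum_i h (A (rho i y) + B (us i)).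
  by move=> Hus; rewrite hs; apply: eq_bigr => i _; rewrite rho_lin.
split=> [x|x] /=.
  apply: addr_ge0 => //; have [u _ Hu] := H x.
  by rewrite (minval_eq 0 Hu).
rewrite big_split /= -hgs; congr (_ + _).
apply/eqP; rewrite eq_le; apply/andP; split.
-
  have Hi i : exists ui, B ui \in Xs i /\
      h (A (rho i x) + B ui) <= minval 0 (fun u => h (A (rho i x) + B u)).
    have [w Hw Hm] := H (rho i x); have [ws Hws Dw] := decomp _ Hw.
    exists (ws i); split => //; rewrite (minval_eq 0 Hm) /= -/h Dw K //.
    rewrite (bigD1 i) //= rho_rho lerDl; apply: sumr_ge0 => j ij.
    exact: h0.
  pose ws i := epsilon (inhabits 0) (fun ui => B ui \in Xs i /\
      h (A (rho i x) + B ui) <= minval 0 (fun u => h (A (rho i x) + B u))).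
  have Hws i := epsilon_spec (inhabits 0) _ (Hi i).
  apply: le_trans (minval_le 0 (ex x) (\sum_i ws i)) _.
  rewrite K; last by move=> j; case: (Hws j).
  by apply: ler_sum => i _; case: (Hws i).
- have [u Hu Hm] := H x; have [us Hus Du] := decomp _ Hu.
  rewrite (minval_eq 0 Hm) /= -/h Du K //; apply: ler_sum => i _.
  exact: minval_le.
Qed.

Lemma all_k T : (forall k, (k < T)%N -> Hk k) -> forall k, (k <= T)%N ->
  (forall x, 0 <= ctg A B g k x) /\
  (forall x, ctg A B g k x = \sum_i ctg A B g k (rho i x)).
Proof.
move=> H; elim=> [_|k IH kT]; first by split.
have [h0 hs] := IH (ltnW kT); exact: step (H k kT) h0 hs.
Qed.

End Main.

Theorem corollary1 (F : fieldType) (vT uT : vectType F) (R : realFieldType)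
    (A : 'End(vT)) (B : 'Hom(uT, vT))
    (* B injective *)
    (HB : injective B)
    (g : vT -> R)
    (Hg0 : forall x, 0 <= g x) (Hgz : forall x, g x = 0 <-> x = 0)
    (* decomposition of X over A *)
    (r : nat) (Hr : (1 < r)%N) (Xs : 'I_r -> {vspace vT})
    (defX : fullv = (\sum_(i < r) Xs i)%VS)
    (Hdir : directv (\sum_(i < r) Xs i))
    (HAinv : forall i, (A @: Xs i <= Xs i)%VS)
    (* g in G_s, where rho_i = sumv_pi_for defX i *)
    (HgGs : in_Gs (sumv_pi_for defX) g)
    (T : nat) (HT : (0 < T)%N)
    (* standing assumption: all minima are attained *)
    (Hatt : forall t, (t < T)%N -> forall x,
        exists u, is_argmin (fun u => Jstar A B g T t.+1 (A x + B u)) u)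
    (* argmin meets the direct sum of the E_i = B^{-1}(X_i) *)
    (Hargmin : forall t, (t < T)%N -> forall x,
        exists2 u, u \in (\sum_(i < r) (B @^-1: Xs i))%VS &
          is_argmin (fun u => Jstar A B g T t.+1 (A x + B u)) u) :
  in_Gs (sumv_pi_for defX) (Jstar A B g T 0).
Proof.
case: HgGs => hg0 hgs.
have H : forall k, (k < T)%N -> @Hk F vT uT R A B g r Xs k.
  move=> k kT x; have tT : (T - k.+1 < T)%N by lia.
  have := Hargmin _ tT x; rewrite /Jstar.
  by have -> : (T - (T - k.+1).+1 = k)%N by lia.
rewrite /Jstar subn0; have [a b] := @all_k F vT uT R A B g r Xs defX Hdir HAinv hg0 hgs T H T (leqnn T).

split; [exact: a|]. move=> x; exact: (b x).
Qed.
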